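(* If Dynamic A* (with \texttt{reeval} true or false) uses a dyn-admissible, dyn-monotonic and dyn-consistent dynamic heuristic, then the sequence of values $\hat g+\hat h$ of the entries $\langle s,\hat g,\hat h\rangle$ popped from Open, in the order they are popped, is non-decreasing.
   Context: A transition system is $\mathcal T=\langle S,L,c,T,s_I,S_G\rangle$ with finite states $S$, finite labels $L$, cost function $c:L\to\mathbb R_{\ge0}$, transitions $T\subseteq S\times L\times S$, initial state $s_I$, goal states $S_G\subseteq S$; $h^*(s)$ is the minimal cost of a path from $s$ to a goal ($\infty$ if none). An information source $\sigma$ consists of a set $\mathcal I_\sigma$, $\iota_0^\sigma\in\mathcal I_\sigma$, $\mathrm{update}_\sigma:\mathcal I_\sigma\times T\to\mathcal I_\sigma$, $\mathrm{refine}_\sigma:\mathcal I_\sigma\times S\to\mathcal I_\sigma$. Reachable information: $\iota_n$ is reachable if obtained from $\iota_0^\sigma$ by a sequence of refine steps on states and update steps on transitions $e_1,\dots,e_n$, where each refined state and each origin of an updated transition is $s_I$ or the target of an earlier updated transition. A dynamic heuristic over $\sigma$ is $h:S\times\mathcal I_\sigma\to\mathbb R_{\ge0}\cup\{\infty\}$. It is dyn-admissible if $h(s,\iota)\le h^*(s)$; dyn-consistent if $h(s,\iota)\le c(\ell)+h(s',\iota)$ for all $\langle s,\ell,s'\rangle\in T$; each for all states and all reachable $\iota$; and dyn-monotonic if $h(s,\iota)\le h(s,\mathrm{update}_\sigma(\iota,t))$ and $h(s,\iota)\le h(s,\mathrm{refine}_\sigma(\iota,s'))$ for all reachable $\iota$,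 all $s,s'\in S$, all $t\in T$. Parent source $\sigma_p$: $\mathcal I_{\sigma_p}$ = partial functions $S\rightharpoonup\mathbb R_{\ge0}\times(T\cup\{\bot\})$; $\iota_0=\{s_I\mapsto\langle0,\bot\rangle\}$; refine is the identity; $\mathrm{update}(\iota,\langle s,\ell,s'\rangle)$ with $\iota(s)=\langle g,\cdot\rangle$ changes only $s'$, setting it to $\langle g+c(\ell),\langle s,\ell,s'\rangle\rangle$ if $\iota(s')$ is undefined or has $g$-component $\ge g+c(\ell)$, otherwise unchanged. Dynamic A* takes $\mathcal T$, sources $\sigma_p,\sigma_h$, a dynamic heuristic $h$ over $\sigma_h$ and a Boolean flag \texttt{reeval}. Notation: at any moment $g(s)$ is the $g$-component of the current $\mathcal I(\sigma_p)(s)$ and $h(s)$ denotes $h(s,\mathcal I(\sigma_h))$ for the current $\mathcal I(\sigma_h)$. Open is a priority queue of entries $\langle s,g,h\rangle$ (duplicates allowed), popped by minimal stored value $g+h$ (ties arbitrary). Algorithm: 1. $\mathcal I(\sigma):=\iota_0^\sigma$ for both sources; $S_{\mathrm{known}}:=\{s_I\}$; Closed $:=\emptyset$; Open empty. If $h(s_I)<\infty$ insert $\langle s_I,g(s_I),h(s_I)\rangle$. 2. While Open is nonempty: pop an entry $\langle s,\hat g,\hat h\rangle$ of minimal $\hat g+\hat h$. If $s\in$ Closed, continue with the next iteration. Otherwise set $\mathcal I(\sigma):=\mathrm{refine}_\sigma(\mathcal I(\sigma),s)$ for both sources. If \texttt{reeval} is true and $\hat h<h(s)$: if $h(s)<\infty$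 insert $\langle s,g(s),h(s)\rangle$; continue with the next iteration (this is a re-evaluation). Otherwise add $s$ to Closed ($s$ is expanded). If $s\in S_G$, return the path obtained by following the parent pointers of $\mathcal I(\sigma_p)$ from $s$ back to $s_I$. Otherwise, for each $t=\langle s,\ell,s'\rangle\in T$ in some order: let $old:=g(s')$ if $s'\in S_{\mathrm{known}}$ and undefined otherwise; set $\mathcal I(\sigma):=\mathrm{update}_\sigma(\mathcal I(\sigma),t)$ for both sources; add $s'$ to $S_{\mathrm{known}}$; if $h(s')=\infty$ skip $s'$; else if $old$ is undefined insert $\langle s',g(s'),h(s')\rangle$; else if $old>g(s')$, remove $s'$ from Closed if it is there (reopening) and insert $\langle s',g(s'),h(s')\rangle$. 3. Return ''unsolvable''. *)

(* Defs.v *)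
From HB Require Import structures.
From mathcomp Require Import all_boot all_order all_algebra.
From mathcomp Require Import constructive_ereal.
Set Implicit Arguments.
Unset Strict Implicit.
Unset Printing Implicit Defensive.
Import Order.TTheory GRing.Theory Num.Theory.
Local Open Scope ring_scope.
Local Open Scope ereal_scope.

Section DynAStar.
Variables (R : realDomainType) (S L : finType).

Definition trans := (S * L * S)%type.
Definition src (t : trans) : S := t.1.1.
Definition lbl (t : trans) : L := t.1.2.
Definition tgt (t : trans) : S := t.2.

Fixpoint goal_path (T : {set trans}) (SG : {set S}) (s : S) (p : seq trans) : bool :=
  match p with
  | [::] => s \in SG
  | t :: p' => [&& t \in T, src t == s & goal_path T SG (tgt t) p']
  end.

Definition path_cost (c : L -> R) (p : seq trans) : R :=
  (\sum_(t <- p) c (lbl t))%R.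

(* [le_hstar T c SG s v] : v <= h^*(s), where h^*(s) is the minimal cost of a
   path from s to a goal (+oo if none), i.e. v is below the cost of every such path. *)
Definition le_hstar (T : {set trans}) (c : L -> R) (SG : {set S}) (s : S)
    (v : \bar R) : Prop :=
  forall p, goal_path T SG s p -> v <= (path_cost c p)%:E.

Record info_source := InfoSource {
  info : Type;
  iota0 : info;
  update : info -> trans -> info;
  refine : info -> S -> info }.

(* [reach_info T sI sig i K]: information i is obtained from iota0 by refine steps
   and update steps (on transitions of T), where every refined state and every
   origin of an updated transition is sI or the target of an earlier updated
   transition; K is the set of such admissible states so far. *)
Inductive reach_info (T : {set trans}) (sI : S) (sig : info_source) :
    info sig -> {set S} -> Prop :=
  | RI0 : reach_info T sI (iota0 sig) [set sI]
  | RIref i K s : reach_info T sI i K -> s \in K ->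
      reach_info T sI (refine i s) K
  | RIupd i K t : reach_info T sI i K -> t \in T -> src t \in K ->
      reach_info T sI (update i t) (tgt t |: K).

Definition reachable_info (T : {set trans}) (sI : S) (sig : info_source) (i : info sig) : Prop :=
  exists K, reach_info T sI i K.

Definition dyn_heuristic (sig : info_source) (h : S -> info sig -> \bar R) : Prop :=
  forall s i, 0 <= h s i /\ h s i != -oo.

Definition dyn_admissible (T : {set trans}) (c : L -> R) (sI : S) (SG : {set S}) (sig : info_source)
    (h : S -> info sig -> \bar R) : Prop :=
  forall s i, reachable_info T sI (sig := sig) i -> le_hstar T c SG s (h s i).

Definition dyn_consistent (T : {set trans}) (c : L -> R) (sI : S) (sig : info_source)
    (h : S -> info sig -> \bar R) : Prop :=
  forall t i, t \in T -> reachable_info T sI (sig := sig) i ->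
    h (src t) i <= (c (lbl t))%:E + h (tgt t) i.

Definition dyn_monotonic (T : {set trans}) (sI : S) (sig : info_source) (h : S -> info sig -> \bar R) : Prop :=
  forall i, reachable_info T sI (sig := sig) i ->
    (forall s t, t \in T -> h s i <= h s (update i t)) /\
    (forall s s', h s i <= h s (refine i s')).

(* partial functions S -> R_{>=0} x (T u {bot}); None = undefined, bot = None *)
Definition pinfo := S -> option (R * option trans).

Definition p_init (sI : S) : pinfo :=
  fun x => if x == sI then Some (0%R, None) else None.

(* update(iota, <s,l,s'>); when iota(s) is undefined (never the case in the
   algorithm) we leave iota unchanged. *)
Definition p_update (c : L -> R) (i : pinfo) (t : trans) : pinfo :=
  match i (src t) with
  | None => i
  | Some (g, _) =>
      let newv := fun x => if x == tgt t then Some ((g + c (lbl t))%R, Some t) else i x in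
      match i (tgt t) with
      | None => newv
      | Some (g', _) => if (g + c (lbl t) <= g')%R then newv else i
      end
  end.

Definition p_refine (i : pinfo) (s : S) : pinfo := i.

Definition parent_source (c : L -> R) (sI : S) : info_source :=
  @InfoSource pinfo (p_init sI) (p_update c) p_refine.

(* g-component of iota(s) (0 if undefined; only used on defined states) *)
Definition gval (i : pinfo) (s : S) : R :=
  match i s with Some (g, _) => g | None => 0%R end.

Definition entry := (S * R * \bar R)%type.
Definition ekey (e : entry) : \bar R := (e.1.2)%:E + e.2.

Record config (sig : info_source) := Config {
  cIp : pinfo;
  cIh : info sig;
  cknown : {set S};
  cclosed : {set S};
  copen : seq entry;
  cdone : bool }.

Variables (T : {set trans}) (c : L -> R) (sI : S) (SG : {set S}).
Variables (sig : info_source) (h : S -> info sig -> \bar R).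

Definition init_config : config sig :=
  let Ip := p_init sI in
  let Ih := iota0 sig in
  Config Ip Ih [set sI] set0
    (if h sI Ih < +oo then [:: (sI, gval Ip sI, h sI Ih)] else [::]) false.

Definition expand_one (cf : config sig) (t : trans) : config sig :=
  let s' := tgt t in
  let known_old := s' \in cknown cf in
  let old := gval (cIp cf) s' in
  let Ip := p_update c (cIp cf) t in
  let Ih := update (cIh cf) t in
  let known := s' |: cknown cf in
  let hs := h s' Ih in
  let new := (s', gval Ip s', hs) in
  if hs == +oo then Config Ip Ih known (cclosed cf) (copen cf) (cdone cf)
  else if ~~ known_old then Config Ip Ih known (cclosed cf) (new :: copen cf) (cdone cf)
  else if (gval Ip s' < old)%R then
    Config Ip Ih known (cclosed cf :\ s') (new :: copen cf) (cdone cf)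
  else Config Ip Ih known (cclosed cf) (copen cf) (cdone cf).

(* Open is a
   multiset (seq); the popped entry is any one of minimal stored value; the
   successors are processed in any order ts. *)
Inductive astar_step (reeval : bool) : config sig -> \bar R -> config sig -> Prop :=
  | StepClosed cf e :
      ~~ cdone cf -> e \in copen cf -> all (fun e' => ekey e <= ekey e') (copen cf) ->
      e.1.1 \in cclosed cf ->
      astar_step reeval cf (ekey e)
        (Config (cIp cf) (cIh cf) (cknown cf) (cclosed cf) (rem e (copen cf)) false)
  | StepReeval cf e :
      ~~ cdone cf -> e \in copen cf -> all (fun e' => ekey e <= ekey e') (copen cf) ->
      e.1.1 \notin cclosed cf ->
      let s := e.1.1 in
      let Ip := p_refine (cIp cf) s in
      let Ih := refine (cIh cf) s in
      reeval -> e.2 < h s Ih ->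
      astar_step reeval cf (ekey e)
        (Config Ip Ih (cknown cf) (cclosed cf)
           (if h s Ih < +oo then (s, gval Ip s, h s Ih) :: rem e (copen cf)
            else rem e (copen cf)) false)
  | StepGoal cf e :
      ~~ cdone cf -> e \in copen cf -> all (fun e' => ekey e <= ekey e') (copen cf) ->
      e.1.1 \notin cclosed cf ->
      let s := e.1.1 in
      let Ip := p_refine (cIp cf) s in
      let Ih := refine (cIh cf) s in
      ~~ (reeval && (e.2 < h s Ih)) -> s \in SG ->
      astar_step reeval cf (ekey e)
        (Config Ip Ih (cknown cf) (s |: cclosed cf) (rem e (copen cf)) true)
  | StepExpand cf e ts :
      ~~ cdone cf -> e \in copen cf -> all (fun e' => ekey e <= ekey e') (copen cf) ->
      e.1.1 \notin cclosed cf ->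
      let s := e.1.1 in
      let Ip := p_refine (cIp cf) s in
      let Ih := refine (cIh cf) s in
      ~~ (reeval && (e.2 < h s Ih)) -> s \notin SG ->
      uniq ts -> (forall t, (t \in ts) = (t \in T) && (src t == s)) ->
      astar_step reeval cf (ekey e)
        (foldl expand_one
           (Config Ip Ih (cknown cf) (s |: cclosed cf) (rem e (copen cf)) false) ts).

(* [astar_run reeval vs cf]: after the iterations so far, the popped values
   (in popping order) are vs and the current configuration is cf. *)
Inductive astar_run (reeval : bool) : seq (\bar R) -> config sig -> Prop :=
  | Run0 : astar_run reeval [::] init_config
  | RunS vs cf v cf' : astar_run reeval vs cf -> astar_step reeval cf v cf' ->
      astar_run reeval (rcons vs v) cf'.

End DynAStar.

(* Main.v *)
Require Import Defs.
From HB Require Import structures.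
From mathcomp Require Import all_boot all_order all_algebra.
From mathcomp Require Import constructive_ereal.
Import Order.TTheory GRing.Theory Num.Theory.
Local Open Scope ring_scope.

Section Proof6.
Variables (R : realDomainType) (S L : finType).
Variables (T : {set trans S L}) (c : L -> R) (sI : S) (SG : {set S}).
Variables (sig : info_source S L) (h : S -> info sig -> \bar R).
Hypothesis c_ge0 : forall l, 0 <= c l.
Hypothesis hmono : dyn_monotonic T sI h.
Hypothesis hcons : dyn_consistent T c sI h.

Local Open Scope ereal_scope.

Definition Inv (b : \bar R) (cf : config R sig) : Prop :=
 [/\ reach_info T sI (cIh cf) (cknown cf),
   forall x, (x \in cknown cf) = (cIp cf x != None),
   forall e, e \in copen cf -> e.1.1 \in cknown cf,
   forall e, e \in copen cf -> b <= ekey e &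
   forall x, x \in cknown cf -> x \notin cclosed cf -> h x (cIh cf) < +oo ->
     exists2 w, w \in copen cf & [/\ w.1.1 = x, w.1.2 = gval (cIp cf) x & w.2 <= h x (cIh cf)]].

Lemma mono_upd (Ih : info sig) K t x : reach_info T sI Ih K -> t \in T ->
  h x Ih <= h x (update Ih t).
Proof. by move=> HR Ht; case: ((@hmono Ih (ex_intro _ K HR))) => H _; apply: H. Qed.

Lemma mono_ref (Ih : info sig) K s x : reach_info T sI Ih K ->
  h x Ih <= h x (refine Ih s).
Proof. by move=> HR; case: ((@hmono Ih (ex_intro _ K HR))) => _ H; apply: H. Qed.

Lemma key_bound b cf e x : Inv b cf -> e \in copen cf ->
  all (fun e' => ekey e <= ekey e') (copen cf) ->
  x \in cknown cf -> x \notin cclosed cf ->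
  ekey e <= (gval (cIp cf) x)%:E + h x (cIh cf).
Proof.
case=> _ _ _ _ HE He Hmin Hx Hc.
case: (boolP (h x (cIh cf) < +oo)) => Hf; last first.
  move: Hf; rewrite ltey negbK => /eqP ->; by rewrite addey // leey.
have [w Hw [_ Hg Hh]] := HE x Hx Hc Hf.
apply: le_trans (allP Hmin w Hw) _.
by rewrite /ekey Hg; apply: leeD2l.
Qed.

Section PU.
Variables (Ip : pinfo R S L) (t : trans S L) (g : R) (p : option (trans S L)).
Hypothesis Hs : Ip (src t) = Some (g, p).

Lemma pu_other x : x != tgt t -> p_update c Ip t x = Ip x.
Proof.
move=> /negbTE Hx; rewrite /p_update Hs.
case: (Ip (tgt t)) => [[g' p']|]; last by rewrite Hx.
by case: ifP; rewrite ?Hx.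
Qed.

Lemma pu_tgt_some : p_update c Ip t (tgt t) != None.
Proof.
rewrite /p_update Hs.
case E: (Ip (tgt t)) => [[g' p']|]; last by rewrite eqxx.
by case: ifP; rewrite ?eqxx ?E.
Qed.

Lemma pu_tgt : gval (p_update c Ip t) (tgt t) = (g + c (lbl t))%R \/
  p_update c Ip t (tgt t) = Ip (tgt t).
Proof.
rewrite /p_update /gval Hs.
case E: (Ip (tgt t)) => [[g' p']|]; last by rewrite eqxx; left.
by case: ifP; rewrite ?eqxx ?E; [left|right].
Qed.

Lemma pu_none : Ip (tgt t) = None -> gval (p_update c Ip t) (tgt t) = (g + c (lbl t))%R.
Proof. by move=> E; rewrite /p_update /gval Hs E eqxx. Qed.

Lemma pu_le : Ip (tgt t) != None -> (gval (p_update c Ip t) (tgt t) <= gval Ip (tgt t))%R.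
Proof.
rewrite /p_update /gval Hs.
case E: (Ip (tgt t)) => [[g' p']|] // _.
by case: ifP => H; rewrite ?eqxx ?E.
Qed.
End PU.
Arguments pu_other {Ip t g p} Hs {x}.
Arguments pu_tgt_some {Ip t g p}.
Arguments pu_tgt {Ip t g p}.
Arguments pu_none {Ip t g p}.
Arguments pu_le {Ip t g p}.

Definition FI (v : \bar R) (s : S) (cf : config R sig) : Prop :=
  [/\ Inv v cf, s \in cknown cf & v <= (gval (cIp cf) s)%:E + h s (cIh cf)].

Lemma expand_one_FI v s cf t : t \in T -> src t = s -> FI v s cf ->
  FI v s (expand_one c h cf t).
Proof.
case: cf => Ip Ih K C O d Ht Hsrc [[/= HR Hdom HO HD HE] HsK HF].
have := HsK; rewrite Hdom; case Egs: (Ip s) => [[g p]|] // _.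
have Hs : Ip (src t) = Some (g, p) by rewrite Hsrc.
set s' := tgt t.
have HR' : reach_info T sI (update Ih t) (s' |: K).
  by apply: RIupd => //; rewrite Hsrc.
have mU x : h x Ih <= h x (update Ih t) by apply: mono_upd HR Ht.
have Hcons : h s (update Ih t) <= (c (lbl t))%:E + h s' (update Ih t).
  by rewrite -Hsrc; apply: hcons => //; exists (s' |: K).
have Hgs : gval Ip s = g by rewrite /gval Egs.
have Hoth x : x != s' -> gval (p_update c Ip t) x = gval Ip x.
  by move=> Hx; rewrite /gval (pu_other Hs Hx).
have HF' : v <= (gval (p_update c Ip t) s)%:E + h s (update Ih t).
  apply: le_trans HF _; apply: leeD; last exact: mU.
  rewrite lee_fin; case: (eqVneq s s') => [Ess'|Hne]; last by rewrite Hoth.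
  rewrite Ess'; case: (pu_tgt Hs) => [->|E]; last by rewrite /gval E.
  by rewrite -Ess' Hgs lerDl.
have Hkey : v <= ((g + c (lbl t))%R)%:E + h s' (update Ih t).
  apply: le_trans HF _; rewrite Hgs EFinD -addeA; apply: leeD2l.
  exact: le_trans (mU s) Hcons.
have Hdom' x : (x \in s' |: K) = (p_update c Ip t x != None).
  rewrite in_setU1; case: (eqVneq x s') => [->|Hne] /=; first by rewrite (pu_tgt_some Hs).
  by rewrite (pu_other Hs Hne) Hdom.
have HO' e : e \in O -> e.1.1 \in s' |: K by move=> He; rewrite in_setU1 HO ?orbT.
have HsK' : s \in s' |: K by rewrite in_setU1 HsK orbT.
have Eoth x : x != s' -> x \in s' |: K -> x \notin C -> h x (update Ih t) < +oo ->
    exists2 w, w \in O & [/\ w.1.1 = x, w.1.2 = gval (p_update c Ip t) x &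
                            w.2 <= h x (update Ih t)].
  move=> Hne; rewrite in_setU1 (negbTE Hne) /= => HxK HxC Hfin.
  have [w Hw [H1 H2 H3]] := HE x HxK HxC (le_lt_trans (mU x) Hfin).
  by exists w => //; split => //; [rewrite Hoth | apply: le_trans H3 _].
rewrite /expand_one /=.
case: ifP => [/eqP Hinf|Hfin].
  split=> //; split=> //= x HxK HxC Hx.
  case: (eqVneq x s') => [Ex|Hne]; last exact: Eoth.
  by move: Hx; rewrite Ex Hinf ltxx.
have Hfin' : h s' (update Ih t) < +oo by rewrite ltey Hfin.
case: ifP => [Hnew|Hold].
  have Eg : gval (p_update c Ip t) s' = (g + c (lbl t))%R.
    apply: (pu_none Hs); apply/eqP; by move: Hnew; rewrite Hdom negbK.
  split=> //; split=> //=.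
  - by move=> e; rewrite in_cons => /orP[/eqP->|/HO'] //=; rewrite in_setU1 eqxx.
  - by move=> e; rewrite in_cons => /orP[/eqP->|/HD] //; rewrite /ekey /= Eg.
  move=> x HxK HxC Hx; case: (eqVneq x s') => [->|Hne].
    by exists (s', gval (p_update c Ip t) s', h s' (update Ih t)); rewrite ?in_cons ?eqxx.
  have [w Hw Hp] := Eoth x Hne HxK HxC Hx.
  by exists w => //; rewrite in_cons Hw orbT.
have Hs'K : s' \in K by move/negbFE: Hold.
case: ifP => [Hlt|Hnlt].
  have Eg : gval (p_update c Ip t) s' = (g + c (lbl t))%R.
    case: (pu_tgt Hs) => // E; move: Hlt; by rewrite /gval E ltxx.
  split=> //; split=> //=.
  - by move=> e; rewrite in_cons => /orP[/eqP->|/HO'] //=; rewrite in_setU1 eqxx.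
  - by move=> e; rewrite in_cons => /orP[/eqP->|/HD] //; rewrite /ekey /= Eg.
  move=> x HxK HxC Hx; case: (eqVneq x s') => [->|Hne].
    by exists (s', gval (p_update c Ip t) s', h s' (update Ih t)); rewrite ?in_cons ?eqxx.
  move: HxC; rewrite in_setD1 Hne /= => HxC.
  have [w Hw Hp] := Eoth x Hne HxK HxC Hx.
  by exists w => //; rewrite in_cons Hw orbT.
split=> //; split=> //= x HxK HxC Hx.
case: (eqVneq x s') => [Ex|Hne]; last exact: Eoth.
rewrite Ex in HxC Hx *.
have Eg : gval (p_update c Ip t) s' = gval Ip s'.
  have := pu_le Hs; rewrite -Hdom => /(_ Hs'K); rewrite le_eqVlt Hnlt orbF.
  by move/eqP.
have [w Hw [H1 H2 H3]] := HE s' Hs'K HxC (le_lt_trans (mU s') Hx).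
by exists w => //; split => //; [rewrite Eg | apply: le_trans H3 _].
Qed.

Lemma fold_FI v s ts cf : (forall t, t \in ts -> (t \in T) && (src t == s)) ->
  FI v s cf -> FI v s (foldl (expand_one c h) cf ts).
Proof.
elim: ts cf => [|t ts IH] cf //= Hts Hcf; apply: IH.
  by move=> t' Ht'; apply: Hts; rewrite in_cons Ht' orbT.
have /andP[Ht /eqP Hs] := Hts t (mem_head _ _).
exact: expand_one_FI.
Qed.

Lemma rem_witness (O : seq (entry R S)) e w : w \in O -> w.1.1 != e.1.1 -> w \in rem e O.
Proof. move=> Hw Hne; apply: rem_mem => //; apply: contraNneq Hne => ->. by []. Qed.

Lemma step_inv reeval b cf v cf' : Inv b cf -> astar_step T c SG h reeval cf v cf' ->
  b <= v /\ Inv v cf'.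
Proof.
move=> Hinv Hst.
case: Hst Hinv.
- move=> cf0 e _ He Hmin HsC [HR Hdom HO HD HE]; split; first exact: HD.
  split=> //=.
  + by move=> e' /mem_rem /HO.
  + by move=> e' /mem_rem He'; apply: (allP Hmin).
  move=> x HxK HxC Hx; have [w Hw [H1 H2 H3]] := HE x HxK HxC Hx.
  exists w => //; apply: rem_witness => //; rewrite H1.
  by apply: contraNneq HxC => ->.
- move=> cf0 e _ He Hmin HsC s Ip Ih _ _ Hinv.
  have Hb x := @key_bound _ _ _ x Hinv He Hmin.
  case: Hinv => HR Hdom HO HD HE; split; first exact: HD.
  have HsK : s \in cknown cf0 by exact: HO.
  have HR' : reach_info T sI Ih (cknown cf0) by apply: RIref.
  have mR x : h x (cIh cf0) <= h x Ih by apply: mono_ref HR.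
  split=> //=.
  + case: ifP => _ e'; last by move/mem_rem/HO.
    by rewrite in_cons => /orP[/eqP->|/mem_rem /HO].
  + have Hmem e' : e' \in rem e (copen cf0) -> ekey e <= ekey e'.
      by move/mem_rem => He'; apply: (allP Hmin).
    case: ifP => _ e'; last exact: Hmem.
    rewrite in_cons => /orP[/eqP->|/Hmem] //.
    rewrite /ekey /=; apply: le_trans (Hb _ HsK HsC) _; apply: leeD2l; exact: mR.
  move=> x HxK HxC Hx; case: (eqVneq x s) => [Exs|Hne].
    by rewrite Exs in Hx *; rewrite Hx; exists (s, gval Ip s, h s Ih); rewrite ?in_cons ?eqxx.
  have [w Hw [H1 H2 H3]] := HE x HxK HxC (le_lt_trans (mR x) Hx).
  exists w; last by split => //; apply: le_trans H3 _.
  have Hw' : w \in rem e (copen cf0) by apply: rem_witness => //; rewrite H1.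
  by case: ifP => _; rewrite ?in_cons Hw' ?orbT.
- move=> cf0 e _ He Hmin HsC s Ip Ih _ _ [HR Hdom HO HD HE]; split; first exact: HD.
  have HsK : s \in cknown cf0 by exact: HO.
  have mR x : h x (cIh cf0) <= h x Ih by apply: mono_ref HR.
  split=> //=.
  + by apply: RIref.
  + by move=> e' /mem_rem /HO.
  + by move=> e' /mem_rem He'; apply: (allP Hmin).
  move=> x HxK; rewrite in_setU1 negb_or => /andP[Hne HxC] Hx.
  have [w Hw [H1 H2 H3]] := HE x HxK HxC (le_lt_trans (mR x) Hx).
  exists w; last by split => //; apply: le_trans H3 _.
  by apply: rem_witness => //; rewrite H1.
- move=> cf0 e ts _ He Hmin HsC s Ip Ih _ _ _ Hts Hinv.
  have Hb x := @key_bound _ _ _ x Hinv He Hmin.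
  case: (Hinv) => HR Hdom HO HD HE; split; first exact: HD.
  have HsK : s \in cknown cf0 by exact: HO.
  have mR x : h x (cIh cf0) <= h x Ih by apply: mono_ref HR.
  suff : FI (ekey e) s (foldl (expand_one c h)
           (Config Ip Ih (cknown cf0) (s |: cclosed cf0) (rem e (copen cf0)) false) ts).
    by case.
  apply: fold_FI; first by move=> t; rewrite Hts.
  split=> //=; last by apply: le_trans (Hb _ HsK HsC) _; apply: leeD2l; exact: mR.
  split=> //=.
  + by apply: RIref.
  + by move=> e' /mem_rem /HO.
  + by move=> e' /mem_rem He'; apply: (allP Hmin).
  move=> x HxK; rewrite in_setU1 negb_or => /andP[Hne HxC] Hx.
  have [w Hw [H1 H2 H3]] := HE x HxK HxC (le_lt_trans (mR x) Hx).
  exists w; last by split => //; apply: le_trans H3 _.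
  by apply: rem_witness => //; rewrite H1.
Qed.

Lemma run_inv reeval vs cf : astar_run T c sI SG h reeval vs cf ->
  Inv (last -oo vs) cf /\ path (fun x y : \bar R => x <= y) -oo vs.
Proof.
elim=> [|vs0 cf0 v cf1 _ [Hinv Hp] Hst].
  split=> //; split=> //=.
  + exact: RI0.
  + by move=> x; rewrite in_set1 /p_init; case: (x == sI).
  + by case: ifP => _ e //; rewrite in_cons orbF => /eqP-> /=; rewrite in_set1.
  + by move=> e _; rewrite leNye.
  move=> x; rewrite in_set1 => /eqP-> _ Hx.
  by exists (sI, gval (p_init R L sI) sI, h sI (iota0 sig)); rewrite ?Hx ?in_cons ?eqxx.
have [Hb Hinv'] := @step_inv _ _ _ _ _ Hinv Hst.
by rewrite last_rcons rcons_path Hp Hb.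
Qed.

End Proof6.

Theorem theorem6 (R : realDomainType) (S L : finType)
    (T : {set trans S L}) (c : L -> R) (sI : S) (SG : {set S})
    (sig : info_source S L) (h : S -> info sig -> \bar R) (reeval : bool) :
  (forall l, 0 <= c l) ->
  dyn_heuristic h ->
  dyn_admissible T c sI SG h ->
  dyn_monotonic T sI h ->
  dyn_consistent T c sI h ->
  forall (vs : seq (\bar R)) (cf : config R sig),
    astar_run T c sI SG h reeval vs cf ->
    sorted (fun x y : \bar R => (x <= y)%E) vs.
Proof.
move=> Hc _ _ Hm Hcons vs cf Hrun.
have [_ Hp] := @run_inv R S L T c sI SG sig h Hc Hm Hcons reeval vs cf Hrun.
exact: path_sorted Hp.
Qed.
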